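(* Let $p(z)$ be any polynomial of degree $n\ge1$ with complex coefficients, and let $m=20n$. Then $$\sup_{|z|\le1}|p'(z)|\le 2n\sup_{k\in\{1,\dots,m\}}\left|p\!\left(e^{2ik\pi/m}\right)\right|.$$ *)

(* Defs.v *)
From HB Require Import structures.
From mathcomp Require Import all_boot all_order all_algebra.
From mathcomp Require Import complex.
From mathcomp Require Import reals trigo.
Set Implicit Arguments. Unset Strict Implicit. Unset Printing Implicit Defensive.
Import Order.TTheory GRing.Theory Num.Theory.
Local Open Scope ring_scope.
Local Open Scope complex_scope.

Definition unit_root_pt (R : realType) (m k : nat) : R[i] :=
  (cos ((2 * k%:R * pi) / m%:R) +i* sin ((2 * k%:R * pi) / m%:R))%C.

(* Main.v *)
Require Import Defs.
From HB Require Import structures.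
From mathcomp Require Import all_boot all_order all_algebra.
From mathcomp Require Import complex.
From mathcomp Require Import reals trigo.
From mathcomp Require Import zify ring lra.
Import Order.TTheory GRing.Theory Num.Theory.
Set Implicit Arguments. Unset Strict Implicit. Unset Printing Implicit Defensive.

Lemma cnt_inner a T n : (\sum_(l < n) (a + l == T))%N = ((a <= T) && (T < a + n))%N.
Proof.
elim: n => [|n IH]; first by rewrite big_ord0 addn0; case: leqP => //= h; rewrite ltnNge h.
rewrite big_ord_recr /= IH.
case: (leqP a T) => h1 /=; last by rewrite add0n; apply/eqP; rewrite eqb0; apply/eqP; lia.
case: (ltnP T (a + n)) => h2 /=.
  have -> : (T < a + n.+1)%N = true by lia.
  have -> : (a + n == T) = false by apply/eqP; lia.
  by [].
case: (eqVneq (a + n) T) => h3.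
  have -> : (T < a + n.+1)%N = true by lia.
  by [].
have -> : (T < a + n.+1)%N = false by apply/negbTE; rewrite -leqNgt; lia.
by [].
Qed.

Lemma cnt_lt n c : (\sum_(i < n) (i < c))%N = minn n c.
Proof.
elim: n => [|n IH]; first by rewrite big_ord0 min0n.
rewrite big_ord_recr /= IH.
case: (ltnP n c) => h /=; lia.
Qed.

Lemma cnt_ge n c : (\sum_(i < n) (c <= i))%N = n - c.
Proof.
elim: n => [|n IH]; first by rewrite big_ord0.
rewrite big_ord_recr /= IH.
case: (leqP c n) => h /=; lia.
Qed.

Lemma cnt1 n j : j <= n ->
  \sum_(i < n) \sum_(l < n) (j.+1 + i + l == n) = n - j.
Proof.
move=> jn.
under eq_bigr => i _ do rewrite cnt_inner.
rewrite (eq_bigr (fun i : 'I_n => nat_of_bool (i < n - j))) ?cnt_lt; first lia.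
move=> i _; congr nat_of_bool; apply/andP/idP => [[]|?]; [lia| split; lia].
Qed.

Lemma cnt2 n j : j <= n ->
  \sum_(i < n) \sum_(l < n) (j.+1 + i + l == n.*2) = j.
Proof.
move=> jn.
under eq_bigr => i _ do rewrite cnt_inner.
rewrite (eq_bigr (fun i : 'I_n => nat_of_bool (n - j <= i))) ?cnt_ge; first lia.
move=> i _; have := ltn_ord i => iN; congr nat_of_bool; apply/andP/idP => [[]|?]; [lia| split; lia].
Qed.


Local Open Scope ring_scope.

Section Abstract.
Variable C : numClosedFieldType.

Definition prim (N : nat) (z : C) := z ^+ N = 1 /\ forall s, (0 < s < N)%N -> z ^+ s != 1.

Lemma prim_norm N (z : C) : (0 < N)%N -> z ^+ N = 1 -> `|z| = 1.
Proof.
move=> N0 zN; apply/eqP; rewrite -(pexpr_eq1 N0) ?normr_ge0 //.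
by rewrite -normrX zN normr1.
Qed.

Lemma prim_sum N (z : C) s : (0 < N)%N -> prim N z ->
  \sum_(k < N) z ^+ (s * k) = if (N %| s)%N then N%:R else 0.
Proof.
move=> N0 [zN zp]; case: ifP => [/dvdnP [q ->]|nd].
  under eq_bigr do rewrite -mulnA mulnCA exprM zN expr1n.
  by rewrite sumr_const card_ord.
have y1 : z ^+ s != 1.
  rewrite (divn_eq s N) exprD mulnC exprM zN expr1n mul1r.
  apply: zp; rewrite ltn_mod N0 andbT lt0n.
  by apply: contraFN nd => /eqP; rewrite -/(dvdn N s) => /eqP.
under eq_bigr do rewrite exprM.
have := subrX1 (z ^+ s) N.
rewrite -exprM mulnC exprM zN expr1n subrr => /esym/eqP.
by rewrite mulf_eq0 subr_eq0 (negbTE y1) /= => /eqP.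
Qed.

Lemma dvdn_lt2 N e : (0 < e < N.*2)%N -> (N %| e)%N = (e == N).
Proof.
move=> /andP[e0 e2]; apply/idP/eqP => [/dvdnP [q eq]|->]; last exact: dvdnn.
subst e; case: q e0 e2 => [|[|q]] //=; first by rewrite mul1n.
rewrite -addnn !mulSn; lia.
Qed.

Lemma dvdn_lt3 N e : (0 < e < N * 3)%N -> (N %| e)%N = (e == N) || (e == N.*2).
Proof.
move=> /andP[e0 e2]; apply/idP/idP => [/dvdnP [q eq]|/orP[]/eqP->]; last 2 first.
- exact: dvdnn.
- by rewrite -muln2 dvdn_mulr.
subst e; case: q e0 e2 => [|[|[|q]]] //=; rewrite ?mul1n ?eqxx ?orbT //.
  by rewrite -addnn mulSn mul1n eqxx orbT.
rewrite !mulSn; lia.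
Qed.

Lemma dft N (z : C) (f : {poly C}) j : (0 < N)%N -> prim N z -> (size f <= N)%N -> (j < N)%N ->
  N%:R * f`_j = \sum_(k < N) f.[z ^+ k] * z ^+ ((N - j) * k).
Proof.
move=> N0 pz sf jN.
under eq_bigr do rewrite (horner_coef_wide _ sf) mulr_suml.
rewrite exchange_big /=.
have E (i k : nat) : f`_i * (z ^+ k) ^+ i * z ^+ ((N - j) * k) = f`_i * z ^+ ((i + (N - j)) * k).
  by rewrite -exprM -mulrA -exprD mulnDl [(i * k)%N]mulnC.
under eq_bigr => i _ do (under eq_bigr => k _ do rewrite E; rewrite -mulr_sumr prim_sum //).
rewrite (eq_bigr (fun i : 'I_N => if (i == j :> nat) then f`_i * N%:R else 0)); last first.
  move=> i _; have := ltn_ord i; move=> iN; rewrite dvdn_lt2; last by rewrite -addnn; apply/andP; split; lia.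
  have -> : (i + (N - j) == N)%N = (i == j :> nat) by apply/eqP/eqP; lia.
  by case: ifP => _; rewrite ?mulr0.
by rewrite -big_mkcond (big_ord1_eq _ (fun i => f`_i * N%:R)) jN mulrC.
Qed.
Lemma coef_bound N (z : C) (f : {poly C}) (B : C) j : (0 < N)%N -> prim N z -> (size f <= N)%N ->
  (forall k, `|f.[z ^+ k]| <= B) -> `|f`_j| <= B.
Proof.
move=> N0 pz sf fB.
have zn : `|z| = 1 by apply: (prim_norm N0); case: pz.
case: (ltnP j N) => jN; last first.
  rewrite nth_default ?normr0; last by apply: leq_trans sf jN.
  by apply: le_trans (fB 0%N); rewrite normr_ge0.
have Nr : 0 < N%:R :> C by rewrite ltr0n.
rewrite -(ler_pM2l Nr) -normr_nat -normrM (dft N0 pz sf jN).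
apply: le_trans (ler_norm_sum _ _ _) _.
rewrite normr_nat.
have -> : N%:R * B = \sum_(k < N) B by rewrite sumr_const card_ord mulr_natl.
apply: ler_sum => k _.
by rewrite normrM normrX zn expr1n mulr1.
Qed.

Lemma mm_bound (g : {poly C}) (B : C) K (rho : nat -> C) z :
  (forall N, (0 < N)%N -> prim N (rho N)) ->
  0 <= B -> (forall w, `|w| = 1 -> `|g.[w]| <= B) -> `|z| <= 1 ->
  `|g.[z]| ^+ K <= ((K * size g).+1)%:R * B ^+ K.
Proof.
move=> hrho B0 hB z1.
set N := (K * size g).+1.
have N0 : (0 < N)%N by [].
have sf : (size (g ^+ K) <= N)%N.
  apply: leq_trans (size_poly_exp_leq _ _) _; rewrite ltnS mulnC leq_mul2l.
  by rewrite leq_pred orbT.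
rewrite -normrX -horner_exp (horner_coef_wide _ sf).
apply: le_trans (ler_norm_sum _ _ _) _.
have -> : N%:R * B ^+ K = \sum_(i < N) B ^+ K by rewrite sumr_const card_ord mulr_natl.
apply: ler_sum => i _.
rewrite normrM normrX.
have hz : `|z| ^+ i <= 1 by apply: exprn_ile1; rewrite ?normr_ge0.
apply: le_trans (ler_wpM2l (normr_ge0 _) hz) _; rewrite mulr1.
have [Nr1 Nr2] := hrho N N0.
have rn : `|rho N| = 1 by apply: (prim_norm N0).
apply: (@coef_bound N (rho N) (g ^+ K) (B ^+ K) i N0 (hrho N N0) sf) => k.
rewrite horner_exp normrX; apply: lerXn2r; rewrite ?nnegrE ?normr_ge0 //.
by apply: hB; rewrite normrX rn expr1n.
Qed.
End Abstract.

Section RealPart.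
Variable R : archiRealFieldType.

Lemma bern2 (e : R) K : 0 <= e ->
  2 + 2 * K%:R * e + K%:R * (K%:R - 1) * e ^+ 2 <= 2 * (1 + e) ^+ K.
Proof.
move=> e0; elim: K => [|K IH]; first by rewrite expr0; lra.
have h : 0 <= K%:R * (K%:R - 1) * e ^+ 3 :> R.
  case: K {IH} => [|K]; first by rewrite mul0r mul0r.
  rewrite -natr1 addrK; apply: mulr_ge0; last exact: exprn_ge0.
  have := ler0n R K; nra.
have k0 : 0 <= K%:R :> R by apply: ler0n.
rewrite -addn1 natrD [(1 + e) ^+ K.+1]exprS.
have P0 : 0 <= (1 + e) ^+ K by apply: exprn_ge0; lra.
move: IH h P0; set P := (1 + e) ^+ K; set k := K%:R => IH h P0.
rewrite !exprS expr0 in IH h *.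
nra.
Qed.

Lemma lim_le (x y : R) d : 0 <= x -> 0 <= y ->
  (forall K, x ^+ K <= ((K * d).+1)%:R * y ^+ K) -> x <= y.
Proof.
move=> x0 y0 H.
rewrite leNgt; apply/negP => yx.
have [y00|ypos] := eqVneq y 0.
  have := H 1%N; rewrite y00 expr1 mulr0 => h; lra.
have yp : 0 < y by rewrite lt_neqAle eq_sym ypos y0.
set e := x / y - 1.
have ep : 0 < e.
  rewrite /e subr_gt0 ltr_pdivlMr // mul1r //.
have HK K : (1 + e) ^+ K <= ((K * d).+1)%:R.
  have := H K.
  rewrite /e addrC subrK expr_div_n ler_pdivrMr; last exact: exprn_gt0.
  by [].
set b := (2 * d%:R + 2) / e ^+ 2.
have d0 : 0 <= d%:R :> R by apply: ler0n.
have b0 : 0 <= b by apply: divr_ge0; [lra| apply: exprn_ge0; lra].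
have := archi_boundP b0; move: (Num.Def.archi_bound b) => k kb.
have e2 : 0 < e ^+ 2 by apply: exprn_gt0.
have k0 : 0 <= k%:R :> R by apply: ler0n.
have h1 : (2 * d%:R + 2) < k%:R * e ^+ 2.
  by rewrite -ltr_pdivrMr ?exprn_gt0.
have h2 := HK k.+1; have h3 := bern2 k.+1 (ltW ep).
rewrite -[((k.+1 * d).+1)%:R]natr1 natrM -[k.+1%:R]natr1 in h2.
rewrite -[k.+1%:R]natr1 in h3.
move: h2 h3; set P := (1 + e) ^+ k.+1; set E2 := e ^+ 2 => h2 h3.
have h4 : (k%:R + 1) * (2 * d%:R + 2) < (k%:R + 1) * (k%:R * E2).
  by rewrite ltr_pM2l //; lra.
have h5 : 0 <= k%:R * e by apply: mulr_ge0 => //; lra.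
rewrite addrK in h3.
move: h2 h3 h4 h5 ep k0; clear; move=> h2 h3 h4 h5 ep k0.
nra.
Qed.
End RealPart.

Section Riesz.
Variable C : numClosedFieldType.
Variables (n : nat) (eta : C).
Hypotheses (n0 : (0 < n)%N) (peta : prim n.*2 eta).

Lemma eta_n : eta ^+ n = -1.
Proof.
case: peta => e2 ep.
have : (eta ^+ n) ^+ 2 == 1 by rewrite -exprM muln2 e2.
rewrite sqrf_eq1 => /orP[/eqP h|/eqP //].
have hn : (0 < n < n.*2)%N by rewrite -addnn; lia.
by have := ep n hn; rewrite h eqxx.
Qed.

Lemma prim_zeta : prim n (eta ^+ 2).
Proof.
case: peta => e2 ep; split; first by rewrite -exprM mul2n.
move=> s hs; rewrite -exprM; apply: ep; rewrite -addnn; lia.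
Qed.

Definition u k := eta ^+ (k.*2.+1).

Lemma usum e : \sum_(k < n) u k ^+ e = eta ^+ e * (if (n %| e)%N then n%:R else 0).
Proof.
rewrite -(prim_sum e n0 prim_zeta) mulr_sumr; apply: eq_bigr => k _.
by rewrite /u -!exprM -exprD; congr (_ ^+ _); rewrite -addnn; nia.
Qed.

Definition cc k := u k * (\sum_(i < n) u k ^+ i) ^+ 2.

Lemma cc_sum j : (j <= n)%N -> \sum_(k < n) u k ^+ j * cc k = n%:R * (2 * j%:R - n%:R).
Proof.
move=> jn.
have E k : u k ^+ j * cc k = \sum_(i < n) \sum_(l < n) u k ^+ (j.+1 + i + l).
  rewrite /cc expr2 mulr_suml !mulr_sumr; apply: eq_bigr => i _.
  rewrite !mulr_sumr; apply: eq_bigr => l _.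
  by rewrite !exprD exprS; ring.
under eq_bigr => k _ do rewrite E.
rewrite exchange_big /=.
under eq_bigr => i _ do rewrite exchange_big /=.
have F (i l : 'I_n) : \sum_(k < n) u k ^+ (j.+1 + i + l) =
    n%:R * ((j.+1 + i + l == n.*2)%N%:R - (j.+1 + i + l == n)%N%:R).
  have := ltn_ord i; have := ltn_ord l => li ii.
  rewrite usum dvdn_lt3; last by apply/andP; split; lia.
  case: eqP => h1; case: eqP => h2 /=; rewrite ?h1 ?h2.
  - by exfalso; move: h1 h2; rewrite -addnn; lia.
  - by rewrite eta_n; ring.
  - by rewrite -addnn exprD eta_n; ring.
  - by ring.
under eq_bigr => i _ do under eq_bigr => l _ do rewrite F.
under eq_bigr => i _ do rewrite -mulr_sumr sumrB.
rewrite -mulr_sumr sumrB.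
under eq_bigr => i _ do rewrite -natr_sum.
under [X in _ * (_ - X)]eq_bigr => i _ do rewrite -natr_sum.
rewrite -!natr_sum cnt1 // cnt2 // natrB //.
by ring.
Qed.


Lemma riesz_id (p : {poly C}) w : (size p <= n.+1)%N ->
  \sum_(k < n) cc k * p.[w * u k] = n%:R * (2 * (w * p^`().[w]) - n%:R * p.[w]).
Proof.
move=> sp.
have sd : (size p^`() <= n)%N.
  case: (eqVneq p 0) => [->|pn0]; first by rewrite deriv0 size_poly0.
  by have := lt_size_deriv pn0; lia.
under eq_bigr do rewrite (horner_coef_wide _ sp) mulr_sumr.
rewrite exchange_big /=.
have E (j : 'I_n.+1) k : cc k * (p`_j * (w * u k) ^+ j) = p`_j * w ^+ j * (u k ^+ j * cc k).
  by rewrite exprMn; ring.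
under eq_bigr => j _ do (under eq_bigr => k _ do rewrite E; rewrite -mulr_sumr cc_sum; last by have := ltn_ord j; lia).
have D : w * p^`().[w] = \sum_(j < n.+1) j%:R * (p`_j * w ^+ j).
  rewrite (horner_coef_wide _ sd) mulr_sumr big_ord_recl /= mul0r add0r.
  apply: eq_bigr => i _; rewrite coef_deriv /bump /= add1n -[p`_i.+1 *+ _]mulr_natl exprS; ring.
rewrite D (horner_coef_wide _ sp) !mulr_sumr -sumrB mulr_sumr.
apply: eq_bigr => j _; ring.
Qed.

Lemma eta_norm : `|eta| = 1.
Proof. by case: peta => e2 _; apply: (prim_norm _ e2); rewrite -addnn; lia. Qed.

Lemma u_norm k : `|u k| = 1.
Proof. by rewrite normrX eta_norm expr1n. Qed.

Lemma u_n k : u k ^+ n = -1.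
Proof.
rewrite /u -exprM mulnC exprM eta_n -mul2n exprS exprM.
by rewrite sqrrN expr1n expr1n mulr1.
Qed.

Lemma cc_le0 k : cc k <= 0.
Proof.
set x := u k; set s := \sum_(i < n) x ^+ i.
have x1 : `|x| = 1 by apply: u_norm.
have x0 : x != 0 by rewrite -normr_eq0 x1 oner_eq0.
have hs : (x - 1) * s = - 2%:R by rewrite -subrX1 u_n; ring.
have xc : x^* = x^-1 by rewrite invC_norm x1 expr1n invr1 mul1r.
set t := x + x^* - 2%:R.
have ct : cc k * t = 4%:R.
  rewrite /cc -/x -/s /t xc.
  have -> : x * s ^+ 2 * (x + x^-1 - 2%:R) = ((x - 1) * s) ^+ 2 * (x * x^-1).
    by field.
  by rewrite hs mulfV // mulr1; ring.
have tre : t = 2%:R * ('Re x - 1).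
  by rewrite ReE /t; field; rewrite ?pnatr_eq0.
have tle : t <= 0.
  rewrite tre; apply: mulr_ge0_le0; first by rewrite ler0n.
  by rewrite subr_le0 -x1; apply: (leif_Re_Creal x).1.
have tn0 : t != 0.
  by apply/eqP => h; move: ct; rewrite h mulr0 => /eqP; rewrite eq_sym pnatr_eq0.
have tlt : t < 0 by rewrite lt_neqAle tn0 tle.
have -> : cc k = 4%:R * t^-1 by rewrite -ct mulfK.
by apply: mulr_ge0_le0; [rewrite ler0n | rewrite invr_le0 ltW].
Qed.

Lemma riesz_bound (p : {poly C}) w S : (size p <= n.+1)%N -> `|w| = 1 ->
  (forall v, `|v| = 1 -> `|p.[v]| <= S) -> `|p^`().[w]| <= n%:R * S.
Proof.
move=> sp w1 hS.
have S0 : 0 <= S.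
  have h1 : `|(1 : C)| = 1 by apply: normr1.
  exact: le_trans (normr_ge0 _) (hS 1 h1).
have id := riesz_id w sp.
have E : 2%:R * n%:R * (w * p^`().[w]) = \sum_(k < n) cc k * p.[w * u k] + n%:R * n%:R * p.[w].
  by rewrite id; ring.
have sc : \sum_(k < n) cc k = - (n%:R * n%:R).
  have := cc_sum (leq0n n); under eq_bigr do rewrite expr0 mul1r.
  by move=> ->; ring.
have B1 : `|2%:R * n%:R * (w * p^`().[w])| <= n%:R * n%:R * S + n%:R * n%:R * S.
  rewrite E; apply: le_trans (ler_normD _ _) _; apply: lerD.
    apply: le_trans (ler_norm_sum _ _ _) _.
    have -> : n%:R * n%:R * S = \sum_(k < n) (- cc k) * S.
      by rewrite -mulr_suml sumrN sc opprK.
    apply: ler_sum => k _; rewrite normrM ler0_norm ?cc_le0 //.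
    apply: ler_wpM2l; first by rewrite oppr_ge0 cc_le0.
    by apply: hS; rewrite normrM w1 u_norm mulr1.
  rewrite !normrM !normr_nat; apply: ler_wpM2l; first by rewrite mulr_ge0 ?ler0n.
  exact: hS.
move: B1; rewrite !normrM w1 mul1r !normr_nat.
have -> : n%:R * n%:R * S + n%:R * n%:R * S = 2%:R * n%:R * (n%:R * S) :> C by ring.
rewrite ler_pM2l //; apply: mulr_gt0; rewrite ltr0n //.
Qed.

End Riesz.

Section Kernel.
Variable C : numClosedFieldType.
Variables (m : nat) (om : C).
Hypotheses (m0 : (0 < m)%N) (pom : prim m om).

Definition nu k := om ^+ k.+1.

Lemma om_norm : `|om| = 1.
Proof. by case: pom => e _; apply: (prim_norm m0 e). Qed.

Lemma nu_norm k : `|nu k| = 1.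
Proof. by rewrite normrX om_norm expr1n. Qed.

Lemma nu_sum e : \sum_(k < m) nu k ^+ e = if (m %| e)%N then m%:R else 0.
Proof.
have -> : \sum_(k < m) nu k ^+ e = om ^+ e * \sum_(k < m) om ^+ (e * k).
  rewrite mulr_sumr; apply: eq_bigr => k _.
  by rewrite /nu -!exprM -exprD; congr (_ ^+ _); lia.
rewrite prim_sum //; case: ifP => [/dvdnP [q ->]|_]; last by rewrite mulr0.
by case: pom => hm _; rewrite mulnC exprM hm expr1n mul1r.
Qed.

Lemma conj_pow (x : C) j : `|x| = 1 -> x ^+ m = 1 -> (j <= m)%N -> x^* ^+ j = x ^+ (m - j).
Proof.
move=> x1 xm jm.
have xj0 : x ^+ j != 0 by rewrite expf_neq0 // -normr_eq0 x1 oner_eq0.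
apply: (mulIf xj0); rewrite -exprMn -exprD subnK // xm.
by rewrite -normCKC x1 expr1n expr1n.
Qed.

Definition G N (x : C) := `|\sum_(j < N) x ^+ j| ^+ 2.

Lemma G_ge0 N x : 0 <= G N x.
Proof. by rewrite /G exprn_ge0. Qed.

Lemma kernel_id (p : {poly C}) n N w : (size p <= n.+1)%N -> (n + N <= m)%N -> `|w| = 1 ->
  \sum_(k < m) p.[nu k] * G N (w * (nu k)^*) =
  m%:R * \sum_(i < n.+1) (N - i)%:R * (p`_i * w ^+ i).
Proof.
move=> sp nN w1.
have numm k : nu k ^+ m = 1.
  by case: pom => hm _; rewrite /nu -exprM mulnC exprM hm expr1n.
have ww : w * w^* = 1 by rewrite -normCK w1 expr1n.
have H k : p.[nu k] * G N (w * (nu k)^*) = \sum_(i < n.+1) \sum_(j < N) \sum_(l < N)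
    (p`_i * w ^+ j * w^* ^+ l) * nu k ^+ (i + l + (m - j)).
  rewrite /G normCK rmorph_sum (horner_coef_wide _ sp).
  under [X in _ * (_ * X)]eq_bigr do rewrite rmorphXn rmorphM /= conjCK.
  rewrite mulr_suml; apply: eq_bigr => i _.
  rewrite mulr_suml mulr_sumr; apply: eq_bigr => j _.
  rewrite !mulr_sumr; apply: eq_bigr => l _.
  have jm : (j <= m)%N by have := ltn_ord j; lia.
  by rewrite !exprMn (conj_pow (nu_norm k) (numm k) jm) !exprD; ring.
under eq_bigr do rewrite H.
rewrite exchange_big /=.
under eq_bigr => i _ do rewrite exchange_big /=.
under eq_bigr => i _ do under eq_bigr => j _ do rewrite exchange_big /=.
under eq_bigr => i _ do under eq_bigr => j _ do under eq_bigr => l _ do rewrite -mulr_sumr nu_sum.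
rewrite mulr_sumr; apply: eq_bigr => i _.
have iN : (i <= n)%N by have := ltn_ord i; lia.
rewrite exchange_big /=.
have E (l j : 'I_N) : p`_i * w ^+ j * w^* ^+ l * (if (m %| i + l + (m - j))%N then m%:R else 0)
    = if (j == (i + l)%N :> nat) then m%:R * (p`_i * w ^+ i) else 0.
  have := ltn_ord j; have := ltn_ord l => lN jN.
  rewrite dvdn_lt2; last by rewrite -addnn; apply/andP; split; lia.
  have -> : (i + l + (m - j) == m)%N = (j == (i + l)%N :> nat) by apply/eqP/eqP; lia.
  case: eqP => [->|_]; last by rewrite mulr0.
  have wl : w ^+ l * w^* ^+ l = 1 by rewrite -exprMn ww expr1n.
  rewrite exprD; transitivity (p`_i * w ^+ i * (w ^+ l * w^* ^+ l) * m%:R); first ring.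
  by rewrite wl mulr1 mulrC.
under eq_bigr => l _ do under eq_bigr => j _ do rewrite E.
under eq_bigr => l _ do rewrite -big_mkcond (big_ord1_eq _ (fun j => m%:R * (p`_i * w ^+ i))).
rewrite (eq_bigr (fun l : 'I_N => (l < N - i)%N%:R * (m%:R * (p`_i * w ^+ i)))); last first.
  move=> l _; have -> : (i + l < N)%N = (l < N - i)%N by apply/idP/idP; lia.
  by case: ifP; rewrite ?mul1r ?mul0r.
rewrite -mulr_suml -natr_sum cnt_lt.
have -> : minn N (N - i) = (N - i)%N by lia.
by rewrite mulrCA.
Qed.

Lemma G_sum n N w : (n + N <= m)%N -> `|w| = 1 ->
  \sum_(k < m) G N (w * (nu k)^*) = m%:R * N%:R.
Proof.
move=> nN w1.
have s1 : (size (1%R : {poly C}) <= n.+1)%N by rewrite size_poly1.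
have := kernel_id s1 nN w1.
under eq_bigr do rewrite hornerC mul1r.
move=> ->; congr (_ * _).
rewrite big_ord_recl /= coef1 eqxx subn0 expr0 !mulr1 big1 ?addr0 //.
by move=> i _; rewrite coef1 /= mul0r mulr0.
Qed.

Lemma kernel_bound (p : {poly C}) n A B w M : (size p <= n.+1)%N -> (n <= B)%N -> (B <= A)%N ->
  (n + A <= m)%N -> `|w| = 1 -> (forall k, (k < m)%N -> `|p.[nu k]| <= M) ->
  (A - B)%:R * `|p.[w]| <= (A + B)%:R * M.
Proof.
move=> sp nB BA nA w1 hM.
have M0 : 0 <= M by apply: le_trans (normr_ge0 _) (hM 0%N m0).
have nB' : (n + B <= m)%N by lia.
have D : m%:R * ((A - B)%:R * p.[w]) =
    \sum_(k < m) p.[nu k] * (G A (w * (nu k)^*) - G B (w * (nu k)^*)).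
  under eq_bigr do rewrite mulrBr.
  rewrite sumrB (kernel_id sp nA w1) (kernel_id sp nB' w1) -mulrBr -sumrB.
  congr (_ * _); rewrite (horner_coef_wide _ sp) mulr_sumr; apply: eq_bigr => i _.
  have iB : (i <= B)%N by have := ltn_ord i; lia.
  have -> : (A - B)%:R = (A - i)%:R - (B - i)%:R :> C.
    by rewrite -natrB; [congr (_%:R); lia| lia].
  by ring.
have mpos : 0 < m%:R :> C by rewrite ltr0n.
rewrite -(ler_pM2l mpos).
have -> : m%:R * ((A - B)%:R * `|p.[w]|) = `|m%:R * ((A - B)%:R * p.[w])|.
  by rewrite !normrM !normr_nat.
rewrite D; apply: le_trans (ler_norm_sum _ _ _) _.
have -> : m%:R * ((A + B)%:R * M) =
    \sum_(k < m) M * (G A (w * (nu k)^*) + G B (w * (nu k)^*)).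
  rewrite -mulr_sumr big_split /= (G_sum nA w1) (G_sum nB' w1) natrD; ring.
apply: ler_sum => k _; rewrite normrM.
apply: le_trans (ler_wpM2r (normr_ge0 _) (hM k (ltn_ord k))) _.
apply: ler_wpM2l => //; apply: le_trans (ler_normB _ _) _.
by rewrite !ger0_norm ?G_ge0.
Qed.
End Kernel.

Section Trig.
Variable R : realType.
Local Open Scope complex_scope.

Lemma urp_mul N a b : unit_root_pt R N a * unit_root_pt R N b = unit_root_pt R N (a + b).
Proof.
rewrite /unit_root_pt.
set x := (2 * a%:R * pi) / N%:R; set y := (2 * b%:R * pi) / N%:R.
have -> : (2 * (a + b)%:R * pi) / N%:R = x + y by rewrite /x /y natrD; ring.
rewrite cosD sinD.
rewrite -[(_ +i* _) * (_ +i* _)]/(_ +i* _).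
by congr (_ +i* _); ring.
Qed.

Lemma urp0 N : unit_root_pt R N 0 = 1.
Proof. by rewrite /unit_root_pt mulr0 mul0r mul0r cos0 sin0. Qed.

Lemma urpX N k : unit_root_pt R N k = unit_root_pt R N 1 ^+ k.
Proof.
elim: k => [|k IH]; first by rewrite urp0 expr0.
by rewrite exprS -IH urp_mul add1n.
Qed.

Lemma urp_prim N : (0 < N)%N -> prim N (unit_root_pt R N 1).
Proof.
move=> N0; have Nr : (N%:R : R) != 0 by rewrite pnatr_eq0 -lt0n.
split.
  rewrite -urpX /unit_root_pt.
  have -> : (2 * N%:R * pi) / N%:R = pi *+ 2 :> R by field.
  by rewrite cos2pi sin2pi.
move=> s /andP[s0 sN]; rewrite -urpX /unit_root_pt.
set x := (2 * s%:R * pi) / N%:R.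
have x0 : 0 < x.
  apply: divr_gt0; last by rewrite ltr0n.
  by apply: mulr_gt0; [apply: mulr_gt0; rewrite ?ltr0n // | exact: pi_gt0].
have x2 : x < pi *+ 2.
  rewrite /x ltr_pdivrMr ?ltr0n //.
  have : (s%:R : R) < N%:R by rewrite ltr_nat.
  have := pi_gt0 R; nra.
apply/negP => /eqP [c1 s1].
have [xlt|xge] := ltrP x pi.
  have : 0 < sin x by apply: sin_gt0_pi; rewrite x0 xlt.
  by rewrite s1 ltxx.
have [xeq|xne] := eqVneq x pi.
  by move: c1; rewrite xeq cospi => h; lra.
have : 0 < sin (x - pi).
  apply: sin_gt0_pi; apply/andP; split.
    by rewrite subr_gt0 lt_neqAle eq_sym xne xge.
  by rewrite ltrBlDr -mulr2n.
have -> : sin (x - pi) = - sin x.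
  by rewrite -[in RHS](subrK pi x) sinDpi opprK.
by rewrite s1 oppr0 ltxx.
Qed.
End Trig.

Lemma bigmax_facts (C : numDomainType) N (F : nat -> C) : (forall k, 0 <= F k) ->
  0 <= \big[Num.max/0]_(k < N) F k /\ forall k, (k < N)%N -> F k <= \big[Num.max/0]_(k < N) F k.
Proof.
elim: N F => [|N IH] F F0; first by rewrite big_ord0.
rewrite big_ord_recl /=.
have [IH1 IH2] := IH (fun k => F k.+1) (fun k => F0 _).
have E : \big[Num.max/0]_(i < N) F (lift ord0 i) = \big[Num.max/0]_(k < N) F k.+1.
  by apply: eq_bigr.
rewrite E.
have ra : \big[Num.max/0]_(k < N) F k.+1 \is Num.real by apply: ger0_real.
have rb : F 0%N \is Num.real by apply: ger0_real.
case: (real_leP rb ra) => h; split => //; try exact: F0.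
- move=> [|k] kN; first exact: h.
  by apply: IH2.
- move=> [|k] kN //.
  exact: le_trans (IH2 k kN) (ltW h).
Qed.

Lemma limC (R : realType) (x y : R[i]) d : 0 <= x -> 0 <= y ->
  (forall K, x ^+ K <= ((K * d).+1)%:R * y ^+ K) -> x <= y.
Proof.
move=> x0 y0 H.
have rx := RRe_real (ger0_real x0); have ry := RRe_real (ger0_real y0).
rewrite -rx -ry lecR; apply: (@lim_le R _ _ d).
- by rewrite -lecR rx.
- by rewrite -lecR ry.
move=> K; have := H K; rewrite -rx -ry.
by rewrite -!(rmorphXn (real_complex R)) -(rmorph_nat (real_complex R)) -rmorphM lecR.
Qed.

Unset Implicit Arguments.

Theorem corollaryF3 (R : realType) (n : nat) (p : {poly R[i]}) :
  (1 <= n)%N -> size p = n.+1 ->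
  let m := (20 * n)%N in
  forall z : R[i], `|z| <= 1 ->
    `|(p^`()).[z]| <=
      (2 * n)%:R * \big[Num.max/0]_(k < m) `|p.[unit_root_pt R m k.+1]|.
Proof.
move=> n1 sp m z z1.
set M := \big[Num.max/0]_(k < m) _.
have m0 : (0 < m)%N by rewrite /m; lia.
have [M0 hM] := @bigmax_facts _ m (fun k => `|p.[unit_root_pt R m k.+1]|) (fun k => normr_ge0 _).
rewrite -/M in M0 hM.
have pom := urp_prim R m0.
have sp' : (size p <= n.+1)%N by rewrite sp.
have h1 : forall w : R[i], `|w| = 1 -> `|p.[w]| <= 2 * M.
  move=> w w1.
  have := @kernel_bound _ m _ m0 pom p n (3 * n.+1) n.+1 w M sp' (leqnSn n) _ _ w1.
  have hk : forall k, (k < m)%N -> `|p.[nu (unit_root_pt R m 1) k]| <= M.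
    by move=> k km; rewrite /nu -urpX; apply: hM.
  move=> /(_ _ _ hk) h.
  have hB : (n.+1 <= 3 * n.+1)%N by lia.
  have hA : (n + 3 * n.+1 <= m)%N by rewrite /m; lia.
  have {h} := h hB hA.
  have -> : ((3 * n.+1 - n.+1)%N%:R : R[i]) = 2 * n.+1%:R.
    by rewrite -natrM; congr (_%:R); lia.
  have -> : ((3 * n.+1 + n.+1)%N%:R : R[i]) = 2 * n.+1%:R * 2.
    by rewrite -!natrM; congr (_%:R); lia.
  rewrite -(mulrA _ 2 M) ler_pM2l //.
  by apply: mulr_gt0; rewrite ltr0n.
have h2 : forall w : R[i], `|w| = 1 -> `|p^`().[w]| <= n%:R * (2 * M).
  move=> w w1.
  have n0 : (0 < n.*2)%N by rewrite -addnn; lia.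
  exact: (@riesz_bound _ n _ n1 (urp_prim R n0) p w (2 * M) sp' w1 h1).
have hrho : forall N, (0 < N)%N -> prim N (unit_root_pt R N 1).
  by move=> N N0; apply: urp_prim.
have B0 : 0 <= n%:R * (2 * M) :> R[i].
  by apply: mulr_ge0; [rewrite ler0n | apply: mulr_ge0; rewrite ?ler0n].
have h3 := fun K => @mm_bound _ (p^`()) (n%:R * (2 * M)) K (fun N => unit_root_pt R N 1) z hrho B0 h2 z1.
have := limC (normr_ge0 _) B0 h3.
have -> : ((2 * n)%N%:R * M = n%:R * (2 * M) :> R[i]) by rewrite natrM; ring.
by [].
Qed.
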